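(* Let $k \geq 1$. Every $k$-degenerate graph $G$ on $n$ vertices is $(k,b)$-colorable for every integer $b \geq 4k\sqrt{k+1}\sqrt{n}$. In other words, $\mathrm{ex}_k(\mathcal{D}_k)(n) \leq 4k\sqrt{k+1}\sqrt{n}$, where $\mathcal{D}_k$ is the class of $k$-degenerate graphs.
   Context: A graph is $k$-degenerate if every subgraph has a vertex of degree at most $k$. A set of vertices $X$ is $2$-independent if any two distinct vertices of $X$ are at distance at least $3$. A graph $G$ is $(a,b)$-colorable if $V(G)$ can be partitioned into $a$ independent sets and $b$ $2$-independent sets (some parts may be empty). For a class $\mathcal{C}$ of graphs, $\mathrm{ex}_a(\mathcal{C})(n)$ denotes the smallest integer $c$ such that every graph of order $n$ in $\mathcal{C}$ is $(a,c)$-colorable. *)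

(* Defs.v *)
From mathcomp Require Import all_boot.
From Stdlib Require Import Reals.
Set Implicit Arguments. Unset Strict Implicit. Unset Printing Implicit Defensive.

Definition simple_graph (T : finType) (e : rel T) : Prop :=
  symmetric e /\ irreflexive e.

(* k-degenerate: every (nonempty) induced subgraph has a vertex of degree <= k.
   (Degree of a vertex in the subgraph is its number of neighbours inside S;
   it suffices to consider induced subgraphs since degrees only shrink.) *)
Definition degenerate (T : finType) (e : rel T) (k : nat) : Prop :=
  forall S : {set T}, S != set0 ->
    exists2 v, v \in S & #|[set u in S | e v u]| <= k.

Definition independent (T : finType) (e : rel T) (X : {set T}) : Prop :=
  forall x y, x \in X -> y \in X -> ~~ e x y.

(* 2-independent: distinct vertices are at distance >= 3, i.e. they are
   neither adjacent nor have a common neighbour. *)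
Definition two_independent (T : finType) (e : rel T) (X : {set T}) : Prop :=
  forall x y, x \in X -> y \in X -> x != y ->
    ~~ e x y /\ (forall z, ~~ (e x z && e z y)).

(* (a,b)-colorable: V partitioned into a independent sets and b
   2-independent sets (parts may be empty); colour classes 0..a-1 are
   independent, colour classes a..a+b-1 are 2-independent. *)
Definition ab_colorable (T : finType) (e : rel T) (a b : nat) : Prop :=
  exists c : T -> 'I_(a + b),
    (forall i : 'I_(a + b), i < a -> independent e [set x | c x == i]) /\
    (forall i : 'I_(a + b), a <= i -> two_independent e [set x | c x == i]).

(* Main.v *)
Require Import Defs.
From mathcomp Require Import all_boot.
From Stdlib Require Import Reals.
From mathcomp Require Import zify.
From Stdlib Require Import Lia Lra Psatz.
Set Implicit Arguments. Unset Strict Implicit. Unset Printing Implicit Defensive.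


Lemma min_rank (T : finType) (S : {set T}) (r : T -> nat) :
  S != set0 -> exists2 v, v \in S & forall u, u \in S -> r v <= r u.
Proof.
case/set0Pn => x xS.
case: (@arg_minnP T x (mem S) r xS) => v vS h.
by exists v.
Qed.

Lemma card_bigcup_le (T I : finType) (A : {set I}) (F : I -> {set T}) :
  #|\bigcup_(z in A) F z| <= \sum_(z in A) #|F z|.
Proof.
elim/big_rec2: _ => [|i n X _ h]; first by rewrite cards0.
apply: leq_trans (leq_card_setU _ _) _.
by rewrite leq_add2l.
Qed.

Lemma degen_color (T : finType) (R : rel T) (d : nat) (A : {set T}) :
  (forall x, ~~ R x x) ->
  (forall S : {set T}, S \subset A -> S != set0 ->
     exists2 v, v \in S & #|[set u in S | R v u || R u v]| <= d) ->
  exists c : T -> 'I_d.+1, forall x y, x \in A -> y \in A -> R x y -> c x != c y.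
Proof.
move=> Rirr; move: {2}#|A| (leqnn #|A|) => m; elim: m A => [|m IH] A.
  rewrite leqn0 cards_eq0 => /eqP -> _.
  by exists (fun _ => ord0) => x y; rewrite in_set0.
move=> hA hdeg; case: (boolP (A == set0)) => [/eqP -> | nA].
  by exists (fun _ => ord0) => x y; rewrite in_set0.
have [v vA hv] := hdeg A (subxx A) nA.
have [c hc] : exists c : T -> 'I_d.+1,
    forall x y, x \in A :\ v -> y \in A :\ v -> R x y -> c x != c y.
  apply: IH.
    by move: hA; rewrite (cardsD1 v A) vA.
  move=> S sS nS; apply: hdeg => //; apply: subset_trans sS (subsetDl _ _).
set N := [set u in A :\ v | R v u || R u v].
have hN : #|c @: N| < #|'I_d.+1|.
  rewrite card_ord ltnS; apply: leq_trans (leq_imset_card _ _) _.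
  apply: leq_trans hv; apply: subset_leq_card; apply/subsetP => u.
  by rewrite !inE => /andP[/andP[_ ->] ->].
have [i iN] : exists i, i \notin c @: N.
  case: (pickP (fun i => i \notin c @: N)) => [i Hi | H0]; first by exists i.
  exfalso; move: hN; rewrite ltnNge => /negP; apply.
  rewrite -cardsT; apply: subset_leq_card; apply/subsetP => i _.
  by move: (H0 i) => /= /negbFE.
exists (fun x => if x == v then i else c x) => x y xA yA Rxy.
case: (eqVneq x v) => [exv|nxv]; case: (eqVneq y v) => [eyv|nyv].
- by subst; rewrite (negbTE (Rirr v)) in Rxy.
- subst x; apply: contraNneq iN => ->; apply: imset_f.
  by rewrite !inE nyv yA Rxy.
- subst y; rewrite eq_sym; apply: contraNneq iN => ->; apply: imset_f.
  by rewrite !inE nxv xA Rxy orbT.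
- by apply: hc; rewrite // !inE ?nxv ?nyv.
Qed.

Lemma rank_exists (T : finType) (e : rel T) k : degenerate e k ->
  exists r : T -> nat, injective r /\
    forall v, #|[set u | e v u & r v < r u]| <= k.
Proof.
move=> hdeg.
suff H : forall S : {set T}, exists r : T -> nat, injective r /\
    forall v, v \in S -> #|[set u in S | e v u & r v < r u]| <= k.
  have [r [ri hr]] := H setT; exists r; split => // v.
  by apply: leq_trans (hr v (in_setT v)); apply: subset_leq_card;
     apply/subsetP => u; rewrite !inE.
move=> S; move: {2}#|S| (leqnn #|S|) => m; elim: m S => [|m IH] S.
  rewrite leqn0 cards_eq0 => /eqP ->.
  exists (fun x => nat_of_ord (enum_rank x)); split; last by move=> v; rewrite in_set0.
  by move=> x y /val_inj /enum_rank_inj.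
move=> hS; case: (boolP (S == set0)) => [/eqP -> | nS].
  exists (fun x => nat_of_ord (enum_rank x)); split; last by move=> v; rewrite in_set0.
  by move=> x y /val_inj /enum_rank_inj.
have [v vS hv] := hdeg S nS.
have [r' [ri hr]] : exists r : T -> nat, injective r /\
    forall w, w \in S :\ v -> #|[set u in S :\ v | e w u & r w < r u]| <= k.
  by apply: IH; move: hS; rewrite (cardsD1 v S) vS.
exists (fun x => if x == v then 0 else (r' x).+1); split.
  move=> x y /=; case: (eqVneq x v) => [->|nxv]; case: (eqVneq y v) => [->|nyv] //.
  by move=> [] /ri.
move=> w wS; case: (eqVneq w v) => [->|nwv].
  apply: leq_trans hv; apply: subset_leq_card; apply/subsetP => u.
  by rewrite !inE => /andP[-> /andP[-> _]].
apply: leq_trans (hr w _); last by rewrite !inE nwv.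
apply: subset_leq_card; apply/subsetP => u; rewrite !inE.
case: (eqVneq u v) => [-> | nuv] //=.
by rewrite ltn0 !andbF.
Qed.

Definition conf (T : finType) (e : rel T) : rel T :=
  fun x y => (x != y) && (e x y || [exists z, e x z && e z y]).

Lemma assemble (T : finType) (e : rel T) k b (X : {set T})
  (c1 : T -> 'I_k) (c2 : T -> nat) :
 (forall x, x \in X -> c2 x < b) ->
 (forall x y, x \notin X -> y \notin X -> e x y -> c1 x != c1 y) ->
 (forall x y, x \in X -> y \in X -> conf e x y -> c2 x != c2 y) ->
 ab_colorable e k b.
Proof.
move=> hb h1 h2.
pose c x : 'I_(k+b) := if x \in X then insubd (lshift b (c1 x)) (k + c2 x)
                       else lshift b (c1 x).
have cX x : x \in X -> val (c x) = k + c2 x.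
  by move=> xX; rewrite /c xX val_insubd ltn_add2l hb.
have cN x : x \notin X -> val (c x) = c1 x.
  by move=> /negbTE xX; rewrite /c xX.
exists c; split.
- move=> i ilt x y; rewrite !inE => /eqP cxi /eqP cyi.
  have xX : x \notin X.
    by apply/negP => xX; move: ilt; rewrite -cxi cX // ltnNge leq_addr.
  have yX : y \notin X.
    by apply/negP => yX; move: ilt; rewrite -cyi cX // ltnNge leq_addr.
  apply/negP => exy; have := h1 x y xX yX exy.
  have -> : c1 x = c1 y by apply: val_inj => /=; rewrite -(cN x xX) -(cN y yX) cxi cyi.
  by rewrite eqxx.
- move=> i ile x y; rewrite !inE => /eqP cxi /eqP cyi nxy.
  have xX : x \in X.
    apply/negPn/negP => xX; move: ile; rewrite -cxi cN // leqNgt.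
    by rewrite ltn_ord.
  have yX : y \in X.
    apply/negPn/negP => yX; move: ile; rewrite -cyi cN // leqNgt.
    by rewrite ltn_ord.
  have ec : c2 x = c2 y.
    by apply/eqP; rewrite -(eqn_add2l k) -cX // -cX // cxi cyi.
  have nconf : ~~ conf e x y by apply/negP => /(h2 x y xX yX); rewrite ec eqxx.
  split.
    by apply/negP => exy; move/negP: nconf; apply; rewrite /conf nxy exy.
  move=> z; apply/negP => hz; move/negP: nconf; apply; rewrite /conf nxy.
  by apply/orP; right; apply/existsP; exists z.
Qed.

Lemma real_to_nat k n b :
  (4 * INR k * sqrt (INR k + 1) * sqrt (INR n) <= INR b)%R ->
  16*k*k*(k+1)*n <= b*b.
Proof.
move=> H.
have hk := pos_INR k.
have hs := sqrt_sqrt (INR k + 1) ltac:(lra).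
have hq := sqrt_sqrt (INR n) (pos_INR n).
have h1 := sqrt_pos (INR k + 1).
have h2 := sqrt_pos (INR n).
have h0 : (0 <= 4 * INR k * sqrt (INR k + 1) * sqrt (INR n))%R.
  repeat apply Rmult_le_pos; lra.
have hsq := Rmult_le_compat _ _ _ _ h0 h0 H H.
have E : (INR (16*k*k*(k+1)*n)%coq_nat <= INR (b*b)%coq_nat)%R.
  rewrite !mult_INR plus_INR.
  replace (INR 16) with 16%R by (simpl; ring).
  replace (INR 1) with 1%R by (simpl; ring).
  nra.
have := INR_le _ _ E.
lia.
Qed.

Lemma arith K n b t h : 1 <= K -> t*t <= n -> n < t.+1*t.+1 -> b < n ->
  16*K*K*(K+1)*n <= b*b -> t*h <= K*n -> h + K + K*K + 2*K*t < b.
Proof.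
move=> K1 tn nt bn hb hh.
have b0 : 0 < b by nia.
have s2 : 16*K*K*(K+1) < b.
  have : b * b < n * b by rewrite ltn_pmul2r.
  nia.
have s3 : 5*K <= t by nia.
have s4 : 5*K*t <= b by nia.
have t0 : 0 < t by lia.
rewrite -(ltn_pmul2l t0).
nia.
Qed.

Lemma cardE_sum (T : finType) (P : pred T) : #|[set u | P u]| = \sum_u P u.
Proof. by rewrite -sum1dep_card big_mkcond; apply: eq_bigr => u _; case: (P u). Qed.

Theorem mainTheorem12 (k : nat) (T : finType) (e : rel T) (b : nat) :
  1 <= k ->
  simple_graph e ->
  degenerate e k ->
  (4 * INR k * sqrt (INR k + 1) * sqrt (INR #|T|) <= INR b)%R ->
  ab_colorable e k b.
Proof.
case: k => [//|k'] _ [esym eirr] hdeg hreal.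
have hb := real_to_nat hreal.
set n := #|T| in hb.
have eirr' : forall x, ~~ e x x by move=> x; rewrite eirr.
have confirr : forall x, ~~ conf e x x by move=> x; rewrite /conf eqxx.
have confsym : forall x y, conf e x y -> conf e y x.
  move=> x y /andP[nxy /orP[exy | /existsP[z /andP[h1 h2]]]];
    rewrite /conf eq_sym nxy /=.
    by rewrite (esym y x) exy.
  by apply/orP; right; apply/existsP; exists z; rewrite (esym y z) h2 (esym z x) h1.
case: (leqP n b) => [nb | bn].
  have hdg : forall S : {set T}, S \subset setT -> S != set0 ->
     exists2 v, v \in S & #|[set u in S | conf e v u || conf e u v]| <= n.-1.
    move=> S _ nS; case/set0Pn: nS => v vS; exists v => //.
    apply: leq_trans (_ : #|S :\ v| <= n.-1).
      apply: subset_leq_card; apply/subsetP => u; rewrite !inE.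
      case/andP => uS /orP[/andP[nvu _]| /andP[nuv _]]; rewrite uS andbT //.
      by rewrite eq_sym.
    have := cardsD1 v S; rewrite vS add1n => hS.
    have : #|S| <= n := max_card _.
    lia.
  have [c2 hc2] := @degen_color T (conf e) n.-1 setT confirr hdg.
  apply: (@assemble T e k'.+1 b setT (fun _ => ord0) (fun x => c2 x)).
  - move=> x _; have : 0 < n by apply/card_gt0P; exists x.
    have := ltn_ord (c2 x); lia.
  - by move=> x y; rewrite in_setT.
  - by move=> x y _ _ hxy; have := hc2 x y (in_setT x) (in_setT y) hxy.
have [r [ri hr]] := rank_exists hdeg.
pose out v := [set u | e v u & r v < r u].
pose inn v := [set u | e u v & r u < r v].
pose t := Nat.sqrt n.
have ht : t * t <= n < t.+1 * t.+1 by have := Nat.sqrt_spec n; lia.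
case/andP: ht => ht1 ht2.
pose H := [set v | t <= #|inn v|].
pose M := [set v | [disjoint out v & H]].
pose X := H :|: M.
pose D := #|H| + k'.+1 + k'.+1 * k'.+1 + 2 * k'.+1 * t.
have hH : t * #|H| <= k'.+1 * n.
  have e1 : \sum_v #|inn v| = \sum_v #|out v|.
    rewrite /inn /out.
    under eq_bigr do rewrite cardE_sum.
    under [RHS]eq_bigr do rewrite cardE_sum.
    by rewrite exchange_big.
  have e2 : t * #|H| <= \sum_(v in H) #|inn v|.
    rewrite mulnC -sum_nat_const; apply: leq_sum => v; by rewrite inE.
  apply: leq_trans e2 _.
  apply: (@leq_trans (\sum_v #|inn v|)).
    rewrite [X in _ <= X](bigID (fun v => v \in H)) /=; exact: leq_addr.
  rewrite e1; apply: (@leq_trans (\sum_(v : T) k'.+1)).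
    by apply: leq_sum => v _; apply: hr.
  by rewrite sum_nat_const mulnC.
have hD : D < b by rewrite /D; apply: (@arith k'.+1 n b t #|H|).
have rlt : forall u v, r v <= r u -> u != v -> r v < r u.
  move=> u v h nuv; rewrite ltn_neqAle h andbT.
  by apply: contra nuv => /eqP /ri ->.
have hdg1 : forall S : {set T}, S \subset ~: X -> S != set0 ->
   exists2 v, v \in S & #|[set u in S | e v u || e u v]| <= k'.
  move=> S sS nS; have [v vS hmin] := min_rank r nS.
  exists v => //.
  have vX : v \notin X by have := subsetP sS v vS; rewrite inE.
  have vM : v \notin M by move: vX; rewrite inE negb_or => /andP[_].
  move: vM; rewrite inE -setI_eq0 => /set0Pn [h]; rewrite inE => /andP[hout hhH].
  apply: (@leq_trans #|out v :\ h|).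
    apply: subset_leq_card; apply/subsetP => u; rewrite inE => /andP[uS euv].
    have euv' : e v u by case/orP: euv => // h'; rewrite esym.
    have nuv : u != v by apply/eqP => uv; move: euv'; rewrite uv (negbTE (eirr' v)).
    have uX : u \notin X by have := subsetP sS u uS; rewrite inE.
    have nuh : u != h.
      apply: contraNneq uX => ->; by rewrite inE hhH.
    by rewrite !inE nuh euv' rlt // hmin.
  have := cardsD1 h (out v); rewrite hout add1n => hc.
  have hv : #|out v| <= k'.+1 by exact: hr.
  lia.
have [c1 hc1] := @degen_color T e k' (~: X) eirr' hdg1.
have outE : forall v u, (u \in out v) = e v u && (r v < r u) by move=> *; rewrite inE.
have innE : forall v u, (u \in inn v) = e u v && (r u < r v) by move=> *; rewrite inE.
have hU : forall A B : {set T}, #|A :|: B| <= #|A| + #|B| := fun A B => leq_card_setU A B.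
have hdg2 : forall S : {set T}, S \subset X -> S != set0 ->
   exists2 v, v \in S & #|[set u in S | conf e v u || conf e u v]| <= D.
  move=> S sS nS.
  have uXcase : forall u, u \in S -> u \notin H -> u \in S :&: (M :\: H).
    move=> u uS uH; have := subsetP sS u uS.
    rewrite /X in_setU (negbTE uH) /= => uM.
    by rewrite in_setI in_setD uS uH uM.
  case: (boolP (S :&: (M :\: H) == set0)) => [/eqP S0 | nS0].
    case/set0Pn: nS => v vS; exists v => //.
    apply: (@leq_trans #|H|); last by rewrite /D; lia.
    apply: subset_leq_card; apply/subsetP => u; rewrite inE => /andP[uS _].
    by apply/negPn/negP => uH; have := uXcase u uS uH; rewrite S0 inE.
  have [v vS' hmin] := min_rank r nS0.
  move: (vS'); rewrite in_setI in_setD => /and3P[vS vH vM].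
  have vMd : [disjoint out v & H] by move: vM; rewrite inE.
  exists v => //.
  pose U := H :|: (out v :|: ((\bigcup_(z in out v) (out z :|: inn z)) :|:
                               \bigcup_(z in inn v) out z)).
  apply: (@leq_trans #|U|).
    apply: subset_leq_card; apply/subsetP => u; rewrite inE => /andP[uS cuv].
    have cvu : conf e v u by case/orP: cuv => // /confsym.
    case/andP: cvu => nvu ecase.
    case: (boolP (u \in H)) => uH; first by rewrite in_setU uH.
    have ltvu : r v < r u.
      by apply: rlt; [apply: hmin; exact: uXcase | rewrite eq_sym].
    rewrite !in_setU; apply/orP; right.
    case/orP: ecase => [evu | /existsP [z /andP [evz ezu]]].
      by rewrite outE evu ltvu.
    have nzv : z != v by apply/eqP => zv; move: evz; rewrite zv (negbTE (eirr' v)).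
    have nzu : z != u by apply/eqP => zu; move: ezu; rewrite zu (negbTE (eirr' u)).
    apply/orP; right; apply/orP.
    case: (ltngtP (r v) (r z)) => hvz.
    - left; apply/bigcupP; exists z; first by rewrite outE evz hvz.
      rewrite in_setU outE innE ezu (esym u z) ezu /=.
      case: (ltngtP (r z) (r u)) => // /ri zu.
      by rewrite zu eqxx in nzu.
    - right; apply/bigcupP; exists z; first by rewrite innE (esym z v) evz hvz.
      by rewrite outE ezu (ltn_trans hvz ltvu).
    - by move/ri: hvz => vz; rewrite vz eqxx in nzv.
  have b1 : #|out v| <= k'.+1 by exact: hr.
  have b2 : #|\bigcup_(z in out v) (out z :|: inn z)| <= #|out v| * (k'.+1 + t).
    apply: leq_trans (card_bigcup_le _ _) _; rewrite -sum_nat_const.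
    apply: leq_sum => z zo; apply: leq_trans (hU _ _) _; apply: leq_add.
      exact: hr.
    have : z \notin H by rewrite (disjointFr vMd zo).
    by rewrite inE -ltnNge => /ltnW.
  have b3 : #|\bigcup_(z in inn v) out z| <= #|inn v| * k'.+1.
    apply: leq_trans (card_bigcup_le _ _) _; rewrite -sum_nat_const.
    by apply: leq_sum => z _; exact: hr.
  have b4 : #|inn v| <= t by move: vH; rewrite inE -ltnNge => /ltnW.
  have b5 : #|U| <= #|H| + (#|out v| + (#|\bigcup_(z in out v) (out z :|: inn z)| +
                  #|\bigcup_(z in inn v) out z|)).
    apply: leq_trans (hU _ _) _; rewrite leq_add2l.
    apply: leq_trans (hU _ _) _; rewrite leq_add2l.
    exact: hU.
  have b6 : #|out v| * (k'.+1 + t) <= k'.+1 * (k'.+1 + t) := leq_mul b1 (leqnn _).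
  have b7 : #|inn v| * k'.+1 <= t * k'.+1 := leq_mul b4 (leqnn _).
  apply: (leq_trans b5); rewrite /D.
  move: b1 b2 b3 b6 b7.
  move: #|out v| #|inn v| #|H| #|\bigcup_(z in out v) (out z :|: inn z)| #|\bigcup_(z in inn v) out z| => o i h B2 B3.
  lia.
have [c2 hc2] := @degen_color T (conf e) D X confirr hdg2.
apply: (@assemble T e k'.+1 b X c1 (fun x => c2 x)).
- by move=> x _; apply: leq_trans (ltn_ord (c2 x)) hD.
- by move=> x y xX yX exy; apply: hc1; rewrite // in_setC.
- by move=> x y xX yX hxy; have := hc2 x y xX yX hxy.
Qed.
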